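(* Let $L$ be a finite connected simplicial complex of dimension $2$ (having at least one $2$-simplex) in which every edge is a face of at least two $2$-simplices, and suppose $\chi(L)\le 2$. Then $L$ has at least $\rho(\chi(L))$ vertices and at least $2\alpha_0(L)-2\chi(L)$ two-simplices, where $\alpha_0(L)$ is the number of vertices of $L$.
   Context: For an integer $k\le 2$, $\rho(k)=\left\lceil \frac{7+\sqrt{49-24k}}{2}\right\rceil$. $\alpha_i(L)$ denotes the number of $i$-simplices of $L$ and $\chi$ the Euler characteristic. *)

(* Defs.v *)
From Stdlib Require Import ZArith Reals.
From mathcomp Require Import all_boot.
Set Implicit Arguments. Unset Strict Implicit. Unset Printing Implicit Defensive.

Definition is_complex (T : finType) (L : {set {set T}}) : Prop :=
  forall s, s \in L -> s != set0 /\ (forall t : {set T}, t \subset s -> t != set0 -> t \in L).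

(* alpha_i(L) = number of i-simplices (simplices with i+1 vertices). *)
Definition alpha (T : finType) (L : {set {set T}}) (i : nat) : nat :=
  #|[set s in L | #|s| == i.+1]|.

Definition is_vertex (T : finType) (L : {set {set T}}) (v : T) : bool :=
  [set v] \in L.

Definition dim2 (T : finType) (L : {set {set T}}) : Prop :=
  (forall s, s \in L -> #|s| <= 3) /\ (exists s, s \in L /\ #|s| = 3).

Definition adj (T : finType) (L : {set {set T}}) : rel T :=
  fun u v => [set u; v] \in L.

(* L is connected: its 1-skeleton is connected (L nonempty is implied by dim2). *)
Definition connected_cx (T : finType) (L : {set {set T}}) : Prop :=
  forall u v, is_vertex L u -> is_vertex L v -> connect (adj L) u v.

Definition edges_in_two_triangles (T : finType) (L : {set {set T}}) : Prop :=
  forall e, e \in L -> #|e| = 2 ->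
    2 <= #|[set s in L | (#|s| == 3) && (e \subset s)]|.

(* Euler characteristic of a complex of dimension <= 2 (alternating sum of
   alpha_i over all dimensions; higher alpha_i vanish for such complexes,
   but we include dimensions up to #|T| to be fully general). *)
Definition euler_char (T : finType) (L : {set {set T}}) : Z :=
  \big[Z.add/0%Z]_(i < #|T|.+1) ((if odd i then (-1)%Z else 1%Z) * Z.of_nat (alpha L i))%Z.

(* rho(k) = ceil((7 + sqrt(49 - 24k))/2); ceiling x = - floor(-x), floor = Int_part. *)
Definition rho (k : Z) : Z :=
  (- Int_part (- ((7 + sqrt (49 - 24 * IZR k)) / 2)))%Z.

(* Main.v *)
Require Import Defs.
From Stdlib Require Import ZArith Reals Lia Lra.
From mathcomp Require Import all_boot zify.

Lemma card_sum (U : finType) (F : {set U}) (P : pred U) :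
  #|[set t in F | P t]| = \sum_(t in F) (P t : nat).
Proof.
rewrite -sum1_card.
rewrite [RHS](eq_bigr (fun t => if P t then 1 else 0)); last by move=> t _; case: (P t).
rewrite -big_mkcondr. apply: eq_bigl => t; by rewrite in_set.
Qed.

Lemma bigZ0 m (g : 'I_m -> Z) : (forall i, g i = 0%Z) ->
  \big[Z.add/0%Z]_(i < m) g i = 0%Z.
Proof.
elim: m g => [|m IH] g H; first by rewrite big_ord0.
rewrite big_ord_recl (IH (fun i => g (lift ord0 i))) ?H //.
Qed.

Lemma alpha_hi (T : finType) (L : {set {set T}}) i :
  dim2 L -> 3 <= i -> alpha L i = 0.
Proof.
move=> [H1 _] Hi; rewrite /alpha; apply/eqP; rewrite cards_eq0; apply/eqP/setP => s.
rewrite !in_set; apply/negbTE/negP => /andP [Hs /eqP Hc].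
have := H1 s Hs; lia.
Qed.

Lemma euler_eq (T : finType) (L : {set {set T}}) :
  dim2 L -> euler_char L =
  (Z.of_nat (alpha L 0) - Z.of_nat (alpha L 1) + Z.of_nat (alpha L 2))%Z.
Proof.
move=> Hd; have [s [_ Hs]] := proj2 Hd.
have : 3 <= #|T| by rewrite -Hs max_card.
rewrite /euler_char; move: #|T| => m.
case: m => [|[|[|k]]] // _.
rewrite !big_ord_recl.
rewrite bigZ0; last by move=> i; rewrite alpha_hi //; case: i => i /=; rewrite /bump /=; lia.
cbn -[alpha Z.of_nat Z.mul Z.add].
rewrite (@alpha_hi _ L 3) // (_ : bump 0 (bump 0 0) = 2) // (_ : bump 0 0 = 1) //; cbn -[alpha Z.of_nat Z.mul Z.add]; lia.
Qed.

Definition verts {T : finType} (L : {set {set T}}) := [set v | [set v] \in L].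

Lemma alpha0_eq (T : finType) (L : {set {set T}}) : alpha L 0 = #|verts L|.
Proof.
rewrite /alpha -(card_imset _ (@set1_inj T)).
suff -> : [set s in L | #|s| == 0.+1] = [set [set x] | x in verts L] by [].
apply/setP => s; rewrite in_set; apply/andP/imsetP.
- move=> [Hs /cards1P [x Hx]]; exists x => //; by rewrite in_set -Hx.
- move=> [v Hv ->]; rewrite in_set in Hv; by rewrite cards1.
Qed.

Lemma sub_verts (T : finType) (L : {set {set T}}) s :
  is_complex L -> s \in L -> s \subset verts L.
Proof.
move=> Hc Hs; apply/subsetP => x Hx; rewrite in_set.
apply: (proj2 (Hc s Hs)); first by rewrite sub1set.
by apply/set0Pn; exists x; rewrite in_set1.
Qed.

Lemma bin2_double n : 2 * 'C(n, 2) = n * n.-1.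
Proof.
elim: n => [|n IH] //.
rewrite binS bin1 mulnDr IH; case: n {IH} => // n /=; lia.
Qed.

Lemma alpha1_le (T : finType) (L : {set {set T}}) :
  is_complex L -> 2 * alpha L 1 <= alpha L 0 * (alpha L 0).-1.
Proof.
move=> Hc; rewrite alpha0_eq -bin2_double leq_mul2l /=.
rewrite -cards_draws; apply: subset_leq_card; apply/subsetP => s.
rewrite !in_set => /andP [Hs ->]; by rewrite sub_verts.
Qed.

Lemma tri_edges (T : finType) (L : {set {set T}}) t :
  is_complex L -> t \in L -> #|t| = 3 ->
  #|[set e in [set s in L | #|s| == 2] | e \subset t]| = 3.
Proof.
move=> Hc Ht Ht3.
rewrite (_ : [set e in _ | _] = [set A : {set T} | A \subset t & #|A| == 2]); first by rewrite cards_draws Ht3.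
apply/setP => e; rewrite !in_set; apply/idP/idP.
- by move=> /andP [/andP [_ ->] ->].
- move=> /andP [Hs He]; rewrite Hs He andbT /=.
  rewrite andbT; apply: (proj2 (Hc t Ht)) => //; apply/eqP => E; by rewrite E cards0 in He.
Qed.

Lemma double_count (T : finType) (L : {set {set T}}) :
  is_complex L -> edges_in_two_triangles L -> 2 * alpha L 1 <= 3 * alpha L 2.
Proof.
move=> Hc He.
set E := [set s in L | #|s| == 2]; set F := [set s in L | #|s| == 3].
have H1 : 2 * #|E| <= \sum_(e in E) #|[set t in F | e \subset t]|.
  rewrite mulnC -sum1_card big_distrl /= leq_sum // => e; rewrite in_set => /andP [Hl /eqP H2].
  rewrite mul1n; have := He e Hl H2.
  suff -> : [set t in F | e \subset t] = [set s in L | (#|s| == 3) && (e \subset s)] by [].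
  apply/setP => t; by rewrite !in_set andbA.
have H2 : \sum_(t in F) #|[set e in E | e \subset t]| = 3 * #|F|.
  rewrite mulnC -sum1_card big_distrl /=; apply: eq_bigr => t; rewrite in_set => /andP [Hl /eqP H3].
  by rewrite mul1n tri_edges.
have H3 : \sum_(e in E) #|[set t in F | e \subset t]| = \sum_(t in F) #|[set e in E | e \subset t]|.
  under eq_bigr do rewrite card_sum.
  rewrite exchange_big /=; apply: eq_bigr => t _; by rewrite card_sum.
rewrite /alpha -/E -/F; lia.
Qed.

Lemma four_verts (T : finType) (L : {set {set T}}) :
  is_complex L -> dim2 L -> edges_in_two_triangles L -> 4 <= alpha L 0.
Proof.
move=> Hc [Hd [s [Hs Hs3]]] He.
have : 0 < #|s| by rewrite Hs3.
rewrite card_gt0 => /set0Pn [x Hx].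
have He2 : #|s :\ x| = 2 by move: (cardsD1 x s); rewrite Hx Hs3; lia.
have HeL : s :\ x \in L.
  apply: (proj2 (Hc s Hs)); first exact: subsetDl.
  apply/eqP => E; by rewrite E cards0 in He2.
have := He _ HeL He2.
set A := [set _ in L | _] => HA.
have HsA : s \in A by rewrite in_set Hs Hs3 eqxx subsetDl.
have : 0 < #|A :\ s| by move: (cardsD1 s A); rewrite HsA; lia.
rewrite card_gt0 => /set0Pn [t]; rewrite !inE => /andP [Hts /andP [Ht /andP [/eqP Ht3 _]]].
have Hi : #|s :&: t| <= 2.
  rewrite leqNgt; apply/negP => Hgt.
  have E1 : s :&: t == s by rewrite eqEcard subsetIl Hs3.
  have Hst : s \subset t by rewrite -(eqP E1) subsetIr.
  have : s == t by rewrite eqEcard Hst Ht3 Hs3.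
  by rewrite eq_sym (negbTE Hts).
have Hu := cardsUI s t.
rewrite alpha0_eq; apply: (@leq_trans #|s :|: t|); first lia.
by apply: subset_leq_card; rewrite subUset !sub_verts.
Qed.

Lemma main_Z (n e f chi : Z) : (4 <= n)%Z -> (2 * e <= 3 * f)%Z -> (2 * e <= n * (n - 1))%Z ->
  chi = (n - e + f)%Z -> (49 - 24 * chi <= (2 * n - 7) * (2 * n - 7))%Z.
Proof. intros; subst; nia. Qed.

Local Open Scope R_scope.
Lemma rho_le (chi n : Z) : (4 <= n)%Z -> (49 - 24 * chi <= (2 * n - 7) * (2 * n - 7))%Z ->
  (rho chi <= n)%Z.
Proof.
move=> H4 H.
have HR : (49 - 24 * IZR chi <= (2 * IZR n - 7) * (2 * IZR n - 7))%R.
  apply IZR_le in H. rewrite minus_IZR !mult_IZR minus_IZR mult_IZR in H. exact H.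
have Hn : (4 <= IZR n)%R by apply IZR_le in H4.
have Hs : (sqrt (49 - 24 * IZR chi) <= 2 * IZR n - 7)%R.
  rewrite -[X in (_ <= X)%R](sqrt_square (2 * IZR n - 7)); last lra.
  by apply sqrt_le_1_alt.
rewrite /rho /Int_part.
set r := Ropp ((7 + sqrt (49 - 24 * IZR chi)) / 2).
have [Hup _] := archimed r.
have : (Ropp (IZR n) <= r)%R by rewrite /r; lra.
move=> Hr.
suff : (- n < up r)%Z by lia.
apply lt_IZR; rewrite opp_IZR; lra.
Qed.

Local Close Scope R_scope.
Theorem lemma3p2 (T : finType) (L : {set {set T}}) :
  is_complex L -> dim2 L -> connected_cx L -> edges_in_two_triangles L ->
  (euler_char L <= 2)%Z ->
  (rho (euler_char L) <= Z.of_nat (alpha L 0))%Z /\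
  (2 * Z.of_nat (alpha L 0) - 2 * euler_char L <= Z.of_nat (alpha L 2))%Z.
Proof.
move=> Hc Hd _ He _.
have H4 := @four_verts _ _ Hc Hd He.
have Hdc := @double_count _ _ Hc He.
have H1 := @alpha1_le _ _ Hc.
have Heu := @euler_eq _ _ Hd.
split.
- apply: rho_le; first lia.
  apply: (@main_Z _ (Z.of_nat (alpha L 1)) (Z.of_nat (alpha L 2))); try lia.

- rewrite Heu; lia.
Qed.
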